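(* Let $\mathbb{K}$ be a field of characteristic zero, let $s,t$ be commuting variables, and work in the noncommutative polynomial algebra $\mathbb{K}[s,t]\langle x,y\rangle$. For a variable $r\in\{s,t,s+t\}$ let $\sigma_r$ be the algebra automorphism with $\sigma_r(x)=x$, $\sigma_r(y)=rx+y$, and let $S_r$ be the $\mathbb{K}[s,t]$-linear map with $S_r(1)=1$ and $S_r(wa)=\sigma_r(w)a$ for every word $w$ and every letter $a\in\{x,y\}$. Then $$\sigma_s\circ\sigma_t=\sigma_{s+t},\qquad S_s\circ S_t=S_{s+t}.$$
   Context: Words are monomials in the noncommuting letters $x,y$; $1$ denotes the empty word. *)

(* Defs.v *)
From HB Require Import structures.
From mathcomp Require Import all_boot all_order all_algebra.
From mathcomp Require Import finmap.
From mathcomp.multinomials Require Import monalg mpoly.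

Set Implicit Arguments.
Unset Strict Implicit.
Unset Printing Implicit Defensive.

Import GRing.Theory.
Local Open Scope ring_scope.

Definition Kst (K : fieldType) := {mpoly K[2]}.
Definition var_s (K : fieldType) : Kst K := 'X_(@ord0 1).
Definition var_t (K : fieldType) : Kst K := 'X_(@ord_max 1).

(* Noncommutative polynomial algebra K[s,t]<x,y>: the monoid algebra of the
   free monoid on the two letters, encoded as bool: false = x, true = y.
   Words are elements of {fmonom bool} (a wrapper around seq bool; the
   empty word is 1). *)
Definition NC (K : fieldType) := {malg (Kst K)[{fmonom bool}]}.

Definition letter (K : fieldType) (a : bool) : NC K := << FMonom [:: a] >>.
Definition X (K : fieldType) : NC K := letter K false.
Definition Y (K : fieldType) : NC K := letter K true.

Definition sigma_word (K : fieldType) (r : Kst K) (w : seq bool) : NC K :=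
  \prod_(a <- w) (if a then r *: X K + Y K else X K).

Definition sigma (K : fieldType) (r : Kst K) (f : NC K) : NC K :=
  \sum_(w <- monalg.msupp f) monalg.mcoeff w f *: sigma_word r w.

(* S_r on a word: S_r(1) = 1 and S_r(w a) = sigma_r(w) a. *)
Definition S_word (K : fieldType) (r : Kst K) (w : seq bool) : NC K :=
  match rev w with
  | [::] => 1
  | a :: u => sigma_word r (rev u) * letter K a
  end.

Definition S_map (K : fieldType) (r : Kst K) (f : NC K) : NC K :=
  \sum_(w <- monalg.msupp f) monalg.mcoeff w f *: S_word r w.

(* Main.v *)
Require Import Defs.
From HB Require Import structures.
From mathcomp Require Import all_boot all_order all_algebra.
From mathcomp Require Import finmap.
From mathcomp.multinomials Require Import monalg mpoly.
Local Open Scope ring_scope.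
Import GRing.Theory.

Section Aux.
Variable K : fieldType.
Local Notation NCK := (NC K).

Definition Lin (F : {fmonom bool} -> NCK) (f : NCK) : NCK :=
  \sum_(w <- monalg.msupp f) monalg.mcoeff w f *: F w.

Lemma LinEw F {f : NCK} {d : {fset {fmonom bool}}} : (monalg.msupp f `<=` d)%fset ->
  Lin F f = \sum_(w <- d) monalg.mcoeff w f *: F w.
Proof.
move=> le; rewrite /Lin (big_fset_incl _ le) //= => w _ /monalg.mcoeff_outdom ->.
by rewrite scale0r.
Qed.

Lemma LinD F : {morph Lin F : f g / f + g}.
Proof.
move=> f g.
rewrite (LinEw F (monalg.msuppD_le f g)) (LinEw F (fsubsetUl (monalg.msupp f) (monalg.msupp g))).
rewrite (LinEw F (fsubsetUr (monalg.msupp f) (monalg.msupp g))) -big_split /=.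
by apply: eq_bigr => w _; rewrite monalg.mcoeffD scalerDl.
Qed.

Lemma Lin0 F : Lin F 0 = 0.
Proof. by rewrite /Lin monalg.msupp0 big_seq_fset0. Qed.

Lemma LinZ F c f : Lin F (c *: f) = c *: Lin F f.
Proof.
rewrite (LinEw F (monalg.msuppZ_le c f)) /Lin scaler_sumr.
by apply: eq_bigr => w _; rewrite monalg.mcoeffZ scalerA.
Qed.

Lemma LinU F c w : Lin F << c *g w >> = c *: F w.
Proof.
rewrite (LinEw F monalg.msuppU_le) big_seq_fset1 monalg.mcoeffUU //.
Qed.

Lemma Lin_sum F (I : Type) (r : seq I) (G : I -> NCK) :
  Lin F (\sum_(i <- r) G i) = \sum_(i <- r) Lin F (G i).
Proof. exact: (big_morph _ (LinD F) (Lin0 F)). Qed.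

Lemma mulrZ (x y : NCK) c : x * (c *: y) = c *: (x * y).
Proof.
apply/monalg.malgP => k.
rewrite monalg.mcoeffZ.
apply: (etrans (@monalg.mcoeffMlw _ _ _ _ x (c *: y) k (fsubset_refl _) (monalg.msuppZ_le c y))).
apply: esym; apply: (etrans (congr1 _ (monalg.mcoeffMl x y k))).
rewrite mulr_sumr; apply: eq_bigr => k1 _; rewrite mulr_sumr.
apply: eq_bigr => k2 _; rewrite monalg.mcoeffZ.
(rewrite mulrnAr; congr (_ *+ _); exact: mulrCA).
Qed.

Lemma sw_cat (r : Kst K) u v : sigma_word r (u ++ v) = sigma_word r u * sigma_word r v.
Proof. by rewrite /sigma_word big_cat. Qed.

Lemma sigmaE (r : Kst K) f : sigma r f = Lin (fun w => sigma_word r w) f.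
Proof. by []. Qed.

Lemma SE (r : Kst K) f : S_map r f = Lin (fun w => S_word r w) f.
Proof. by []. Qed.

Lemma sigmaM (r : Kst K) f g : sigma r (f * g) = sigma r f * sigma r g.
Proof.
rewrite !sigmaE monalg.malgME Lin_sum [X in _ = X * _]/Lin mulr_suml.
apply: eq_bigr => k1 _; rewrite Lin_sum [X in _ = _ * X]/Lin mulr_sumr.
apply: eq_bigr => k2 _; rewrite LinU fmM sw_cat.
by rewrite -scalerAl mulrZ scalerA.
Qed.

Lemma sigma1 (r : Kst K) : sigma r 1 = 1.
Proof.
rewrite sigmaE -monalg.mpolyC1E LinU fm1 scale1r.
by rewrite /sigma_word big_nil.
Qed.

Lemma sigma_letter (r : Kst K) a :
  sigma r (letter K a) = if a then r *: X K + Y K else X K.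
Proof. by rewrite sigmaE /letter LinU scale1r /sigma_word big_seq1. Qed.

Lemma auxl (R : nzRingType) (V : lmodType R) (x y : V) (s t : R) :
  t *: x + (s *: x + y) = (s + t) *: x + y.
Proof. by rewrite scalerDl addrA [t *: x + _]addrC. Qed.
Definition img (r : Kst K) (a : bool) : NCK := if a then r *: X K + Y K else X K.

Lemma sw_nil (r : Kst K) : sigma_word r [::] = 1.
Proof. by rewrite /sigma_word big_nil. Qed.

Lemma sw_cons (r : Kst K) a w : sigma_word r (a :: w) = img r a * sigma_word r w.
Proof. by rewrite /sigma_word big_cons. Qed.

Lemma sigma_comp_word (s t : Kst K) (w : seq bool) :
  sigma s (sigma_word t w) = sigma_word (s + t) w.
Proof.
elim: w => [|a w IH]; first by rewrite !sw_nil sigma1.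
rewrite !sw_cons sigmaM IH; congr (_ * _).
case: a; last by rewrite /img /X sigma_letter.
rewrite /img sigmaE LinD LinZ -!sigmaE /X /Y !sigma_letter.
exact: auxl.
Qed.

Lemma S_map_letter (r : Kst K) g a : S_map r (g * letter K a) = sigma r g * letter K a.
Proof.
rewrite SE /letter monalg.malgM_def monalg.fgmulgU Lin_sum sigmaE [X in _ = X * _]/Lin mulr_suml.
apply: eq_bigr => k _; rewrite LinU mulr1 -scalerAl; congr (_ *: _).
by rewrite fmM /S_word rev_cat /= revK.
Qed.

Lemma S_map1 (r : Kst K) : S_map r 1 = 1.
Proof.
by rewrite SE -monalg.mpolyC1E LinU fm1 scale1r.
Qed.

Lemma S_comp_word (s t : Kst K) w :
  S_map s (S_word t w) = S_word (s + t) w.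
Proof.
case/lastP: w => [|u a]; first by rewrite /S_word /= S_map1.
by rewrite /S_word !rev_rcons S_map_letter sigma_comp_word.
Qed.

End Aux.

Theorem lemma2p1 (K : fieldType) (charK0 : [pchar K] =i pred0) :
  (forall f : NC K,
      sigma (var_s K) (sigma (var_t K) f) = sigma (var_s K + var_t K) f) /\
  (forall f : NC K,
      S_map (var_s K) (S_map (var_t K) f) = S_map (var_s K + var_t K) f).
Proof.
split=> f.
  rewrite [sigma (var_t K) f]sigmaE /Lin sigmaE Lin_sum.
  apply: eq_bigr => w _; by rewrite LinZ -sigmaE sigma_comp_word.
rewrite [S_map (var_t K) f]SE /Lin SE Lin_sum.
apply: eq_bigr => w _; by rewrite LinZ -SE S_comp_word.
Qed.
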